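(* Let $c,k_1,k_2,k_3,k_4$ be real constants with $k_1\neq0$, and let $F$ be a smooth function of $x$ on an interval satisfying identically $$\Big(F(x)+\frac{k_3}{2}\Big)\Big(F(x)+\frac{c}{k_1}x+\frac{k_2}{k_1}-k_3\Big)^2=k_4.$$ Then for $V(x,y)=cy+F(x)$ the function $$J=k_1\dot x^3+\dot x^2\dot y+\big(3k_1F(x)+cx+k_2\big)\dot x+\big(2F(x)+k_3\big)\dot y$$ is a first integral of $\ddot x=-V_{,x}$, $\ddot y=-V_{,y}$.
   Context: A first integral is a function of $(t,x,y,\dot x,\dot y)$ whose total time derivative vanishes along every solution of the given equations of motion. *)

(* Defs.v *)
From Stdlib Require Import Reals.
From Coquelicot Require Import Coquelicot.
Open Scope R_scope.

Definition in_oint (a b : Rbar) (x : R) : Prop := Rbar_lt a x /\ Rbar_lt x b.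

Definition smooth_on (a b : Rbar) (F : R -> R) : Prop :=
  forall (n : nat) (x : R), in_oint a b x -> ex_derive_n F n x.

Definition V (c : R) (F : R -> R) (x y : R) : R := c * y + F x.

Definition V_x (c : R) (F : R -> R) (x y : R) : R := Derive (fun u => V c F u y) x.
Definition V_y (c : R) (F : R -> R) (x y : R) : R := Derive (fun v => V c F x v) y.

Definition J (c k1 k2 k3 : R) (F : R -> R) (x y xd yd : R) : R :=
  k1 * xd ^ 3 + xd ^ 2 * yd + (3 * k1 * F x + c * x + k2) * xd
  + (2 * F x + k3) * yd.

Definition is_solution (c : R) (F : R -> R) (a b t0 t1 : Rbar)
  (x y xd yd : R -> R) : Prop :=
  forall t, in_oint t0 t1 t ->
    in_oint a b (x t) /\
    is_derive x t (xd t) /\ is_derive y t (yd t) /\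
    is_derive xd t (- V_x c F (x t) (y t)) /\
    is_derive yd t (- V_y c F (x t) (y t)).

Definition first_integral (c : R) (F : R -> R) (a b : Rbar)
  (I : R -> R -> R -> R -> R -> R) : Prop :=
  forall (t0 t1 : Rbar) (x y xd yd : R -> R),
    is_solution c F a b t0 t1 x y xd yd ->
    forall t, in_oint t0 t1 t ->
      is_derive (fun s => I s (x s) (y s) (xd s) (yd s)) t 0.

(* Main.v *)
Require Import Defs.
From Stdlib Require Import Reals Lra Psatz Classical.
From Coquelicot Require Import Coquelicot.
Open Scope R_scope.

Lemma loc_oint (a b : Rbar) x : in_oint a b x -> locally x (in_oint a b).
Proof.
  intros [h1 h2].
  exact (filter_and _ _ (open_Rbar_gt' (Finite x) a h1) (open_Rbar_lt' (Finite x) b h2)).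
Qed.

Theorem mainTheorem12 (c k1 k2 k3 k4 : R) (a b : Rbar) (F : R -> R) :
  k1 <> 0 ->
  Rbar_lt a b ->
  smooth_on a b F ->
  (forall x, in_oint a b x ->
     (F x + k3 / 2) * (F x + c / k1 * x + k2 / k1 - k3) ^ 2 = k4) ->
  first_integral c F a b (fun _ x y xd yd => J c k1 k2 k3 F x y xd yd).
Proof.
  intros hk1 _ hs hF.
  set (D := Derive F).
  set (G := fun u => F u + c / k1 * u + k2 / k1 - k3).
  set (H := fun u => D u * (3*k1*F u + c*u + k2) + c*(2*F u + k3)).
  assert (dF : forall x, in_oint a b x -> ex_derive F x).
  { intros x hx. exact (hs 1%nat x hx). }
  assert (dD : forall x, in_oint a b x -> ex_derive D x).
  { intros x hx. exact (hs 2%nat x hx). }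
  assert (dG : forall x, in_oint a b x -> is_derive G x (D x + c/k1)).
  { intros x hx. unfold G. auto_derive.
    - apply dF; exact hx.
    - change (fun x0 : R => F x0) with F; unfold D; ring. }
  assert (HG : forall x, in_oint a b x -> H x * G x = 0).
  { intros x hx.
    assert (e : is_derive (fun u => (F u + k3 / 2) * G u ^ 2) x 0).
    { apply is_derive_ext_loc with (f := fun _ => k4).
      - generalize (loc_oint a b x hx). apply filter_imp. intros u hu.
        symmetry. apply hF. exact hu.
      - apply (is_derive_const k4 x). }
    assert (e2 : is_derive (fun u => (F u + k3 / 2) * G u ^ 2) x
         ((D x) * G x ^ 2 + (F x + k3/2) * (2 * G x * (D x + c/k1)))).
    { auto_derive.
      - split; [apply dF; exact hx|]. split; [|exact I].
        exists (D x + c/k1). apply dG. exact hx.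
      - replace (Derive (fun x0 => G x0) x) with (D x + c/k1).
        + change (fun x0 : R => F x0) with F; unfold D; ring.
        + symmetry. apply is_derive_unique. apply dG. exact hx. }
    apply is_derive_unique in e. apply is_derive_unique in e2.
    rewrite e in e2.
    transitivity (k1 * ((D x) * G x ^ 2 + (F x + k3/2) * (2 * G x * (D x + c/k1)))).
    - unfold H, G. field. exact hk1.
    - rewrite <- e2. ring. }
  assert (H0 : forall x, in_oint a b x -> H x = 0).
  { intros x0 hx0. apply NNPP. intro hne.
    assert (cH : continuous H x0).
    { apply (@ex_derive_continuous R_AbsRing R_NormedModule). unfold H. auto_derive.
      repeat split; try (apply dF; exact hx0). apply dD. exact hx0. }
    assert (loc : locally x0 (fun u => H u <> 0 /\ in_oint a b u)).
    { apply filter_and; [|apply loc_oint; exact hx0].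
      exact (cH (fun u => u <> 0) (open_neq 0 (H x0) hne)). }
    assert (g0 : is_derive G x0 0).
    { apply is_derive_ext_loc with (f := fun _ => 0).
      - generalize loc. apply filter_imp. intros u [h1 h2].
        specialize (HG u h2). symmetry.
        destruct (Rmult_integral _ _ HG); [contradiction|assumption].
      - apply (is_derive_const 0 x0). }
    assert (Gx0 : G x0 = 0).
    { assert (h := locally_singleton _ _ loc). simpl in h. destruct h as [h1 h2].
      specialize (HG x0 h2). destruct (Rmult_integral _ _ HG); [contradiction|assumption]. }
    pose proof (is_derive_unique _ _ _ g0) as u1.
    pose proof (is_derive_unique _ _ _ (dG x0 hx0)) as u2.
    rewrite u1 in u2.
    apply hne. unfold H. unfold G in Gx0.
    assert (Dx : D x0 = - (c/k1)) by lra. rewrite Dx.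
    field_simplify; [|exact hk1].
    field_simplify in Gx0; [|exact hk1].
    assert (k1 * F x0 + c * x0 + k2 - k3 * k1 = 0).
    { apply (Rmult_eq_reg_r (/k1)); [|apply Rinv_neq_0_compat; exact hk1].
      rewrite Rmult_0_l. rewrite <- Gx0. field. exact hk1. }
    nra. }
  intros t0 t1 x y xd yd sol t ht.
  destruct (sol t ht) as [hx [ex [ey [exd eyd]]]].
  assert (Vx : V_x c F (x t) (y t) = D (x t)).
  { unfold V_x, V. apply is_derive_unique. auto_derive.
    - apply dF; exact hx.
    - change (fun x0 : R => F x0) with F; unfold D; ring. }
  assert (Vy : V_y c F (x t) (y t) = c).
  { unfold V_y, V. apply is_derive_unique. auto_derive; [exact I| ring]. }
  rewrite Vx in exd. rewrite Vy in eyd.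
  unfold J. auto_derive.
  - repeat split; first [exact I | apply dF; exact hx | eexists; eassumption].
  - replace (Derive (fun x0 => xd x0) t) with (- D (x t))
      by (symmetry; apply is_derive_unique; exact exd).
    replace (Derive (fun x0 => yd x0) t) with (- c)
      by (symmetry; apply is_derive_unique; exact eyd).
    replace (Derive (fun x0 => x x0) t) with (xd t)
      by (symmetry; apply is_derive_unique; exact ex).
    replace (Derive (fun x0 => y x0) t) with (yd t)
      by (symmetry; apply is_derive_unique; exact ey).
    change (fun x0 : R => F x0) with F. fold D.
    pose proof (H0 (x t) hx) as h. unfold H in h.
    transitivity (- (D (x t) * (3 * k1 * F (x t) + c * x t + k2) + c * (2 * F (x t) + k3)));
      [ring | rewrite h; ring].
Qed.
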